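(* Let $K$ be a finite extension of $\mathbb Q$, $\mathcal O$ its ring of integers, $B\subset\mathcal O$ an order, $S\subset B$ a multiplicatively closed subset and $A=B_S$. Let $\mu:A^2\to U(k)$ be a finite-dimensional unitary representation of the additive group $A^2$ whose character is $SL(2,A)$-invariant, i.e. $\mathrm{tr}\,\mu(g.t)=\mathrm{tr}\,\mu(t)$ for all $g\in SL(2,A)$, $t\in A^2$ (with $SL(2,A)$ acting on $A^2$ by matrix multiplication). Then there exists a nonzero $q\in\mathbb N$ such that $\mu$ is trivial on $(qA)^2$, i.e. $\mu$ factors through $(A/qA)^2$. *)

(* Defs.v *)
From HB Require Import structures.
From mathcomp Require Import all_boot all_order all_algebra all_field.
Set Implicit Arguments. Unset Strict Implicit. Unset Printing Implicit Defensive.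
Import Order.TTheory GRing.Theory Num.Theory.
Local Open Scope ring_scope.

(* K is a number field: a finite-dimensional field extension L of rat. *)

Definition integral_elt (L : fieldExtType rat) (x : L) : Prop :=
  exists p : {poly int}, p \is monic /\ root (map_poly (fun z : int => z%:~R : L) p) x.

Definition is_subring (L : fieldExtType rat) (B : pred L) : Prop :=
  1 \in B /\ (forall x y, x \in B -> y \in B -> x - y \in B) /\
  (forall x y, x \in B -> y \in B -> x * y \in B).

(* B is an order of L: a subring of the ring of integers O_L whose
   Q-span is all of L (equivalently, a full-rank subring of O_L). *)
Definition is_order (L : fieldExtType rat) (B : pred L) : Prop :=
  is_subring B /\ (forall x, x \in B -> integral_elt x) /\
  (forall x : L, exists n : nat, (0 < n)%N /\ (n%:R * x) \in B).

Definition mult_closed_in (L : fieldExtType rat) (B S : pred L) : Prop :=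
  (forall s, s \in S -> s \in B) /\ 1 \in S /\
  (forall s t, s \in S -> t \in S -> s * t \in S).

Definition localization (L : fieldExtType rat) (B S : pred L) (x : L) : Prop :=
  exists b s, [/\ b \in B, s \in S & x = b / s].

Definition adjmx (C : numClosedFieldType) (k : nat) (M : 'M[C]_k) : 'M[C]_k :=
  (map_mx Num.conj M)^T.

(* Main.v *)
Require Import Defs.
From HB Require Import structures.
From mathcomp Require Import all_boot all_order all_algebra all_field.
From Stdlib Require Import Classical ClassicalEpsilon Lia.
Import Order.TTheory GRing.Theory Num.Theory.
Local Open Scope ring_scope.
Definition clb (P : Prop) : bool := if excluded_middle_informative P then true else false.
Lemma clbP P : reflect P (clb P).
Proof. rewrite /clb; case: excluded_middle_informative => h; by constructor. Qed.

Lemma artin (G : Type) (D : G -> Prop) (add : G -> G -> G) (e : G)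
  (C : numClosedFieldType) :
  D e -> (forall a b, D a -> D b -> D (add a b)) ->
  forall n (chi : 'I_n -> G -> C) (c : 'I_n -> C),
  (forall i a b, D a -> D b -> chi i (add a b) = chi i a * chi i b) ->
  (forall i, chi i e = 1) ->
  (forall a, D a -> \sum_i c i * chi i a = 0) ->
  forall psi : G -> C,
  \sum_(i | clb (forall a, D a -> chi i a = psi a)) c i = 0.
Proof.
move=> De Dadd; elim=> [|n IH] chi c hmul he hrel psi; first by rewrite big_ord0.
have [all_eq|] := classic (forall i, forall a, D a -> chi i a = psi a).
  rewrite (eq_bigl xpredT) => [|i]; last by apply/clbP/all_eq.
  rewrite -[RHS](hrel e De); apply: eq_bigr => i _; by rewrite he mulr1.
move/not_all_ex_not; case=> m; move/not_all_ex_not; case=> b hb.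
have [Db neq] := imply_to_and _ _ hb.
pose Q i := clb (forall a, D a -> chi i a = psi a).
have Qm : Q m = false by apply/clbP => /(_ b Db).
have hrel' : forall a, D a -> \sum_j (c (lift m j) * (chi (lift m j) b - chi m b)) * chi (lift m j) a = 0.
  move=> a Da.
  have h1 := hrel _ (Dadd _ _ Da Db).
  have h2 := hrel _ Da.
  have : \sum_i c i * (chi i b - chi m b) * chi i a = 0.
    under eq_bigr => i _ do rewrite mulrBr mulrBl.
    rewrite sumrB; under eq_bigr => i _ do rewrite -mulrA [chi i b * _]mulrC -hmul //.
    rewrite h1; under eq_bigr => i _ do rewrite -mulrA [chi m b * _]mulrC mulrA.
    by rewrite -mulr_suml h2 mul0r subrr.
  by rewrite (bigD1_ord m) //= subrr mulr0 mul0r add0r.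
have hs := IH (fun j => chi (lift m j)) (fun j => c (lift m j) * (chi (lift m j) b - chi m b))
  (fun j => hmul (lift m j)) (fun j => he (lift m j)) hrel' psi.
move: hs; set s := (X in X = 0) => hs.
have : s = (psi b - chi m b) * \sum_(j | Q (lift m j)) c (lift m j).
  rewrite mulr_sumr /s; apply: eq_bigr => j /clbP hj.
  by rewrite hj // mulrC.
rewrite hs => /esym /eqP; rewrite mulf_eq0 subr_eq0 eq_sym (negPf (introN eqP neq)) /= => /eqP h.
rewrite big_mkcond (bigD1_ord m) //= -/(Q m) Qm add0r -big_mkcond; exact: h.
Qed.

Lemma multiset_sub (G : Type) (D : G -> Prop) (add : G -> G -> G) (e : G)
  (C : numClosedFieldType) :
  D e -> (forall a b, D a -> D b -> D (add a b)) ->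
  forall k (d f : 'I_k -> G -> C),
  (forall i a b, D a -> D b -> d i (add a b) = d i a * d i b) ->
  (forall i, d i e = 1) ->
  (forall i a b, D a -> D b -> f i (add a b) = f i a * f i b) ->
  (forall i, f i e = 1) ->
  (forall a, D a -> \sum_i d i a = \sum_i f i a) ->
  forall i0, exists j, forall a, D a -> d j a = f i0 a.
Proof.
move=> De Dadd k d f dmul de fmul fe hsum i0.
pose chi (i : 'I_(k + k)) := match split i with inl j => d j | inr j => f j end.
pose c (i : 'I_(k + k)) : C := match split i with inl j => 1 | inr j => -1 end.
have sl j : split (lshift k j) = inl j := unsplitK (inl j).
have sr j : split (rshift k j) = inr j := unsplitK (inr j).
have hm : forall i a b, D a -> D b -> chi i (add a b) = chi i a * chi i b.
  by move=> i a b Da Db; rewrite /chi; case: split => j; [apply: dmul | apply: fmul].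
have he : forall i, chi i e = 1 by move=> i; rewrite /chi; case: split.
have hr : forall a, D a -> \sum_i c i * chi i a = 0.
  move=> a Da; rewrite big_split_ord /=.
  under eq_bigr => j _ do rewrite /c /chi sl mul1r.
  under [X in _ + X]eq_bigr => j _ do rewrite /c /chi sr mulN1r.
  by rewrite sumrN hsum // subrr.
have := @artin G D add e C De Dadd (k + k) chi c hm he hr (f i0).
rewrite big_split_ord /= => h.
apply: NNPP => hno.
have h1 : \sum_(j | clb (forall a, D a -> chi (lshift k j) a = f i0 a)) c (lshift k j) = 0.
  apply: big_pred0 => j; apply/clbP => hj; apply: hno; exists j => a Da.
  by have := hj a Da; rewrite /chi sl.
move: h; rewrite h1 add0r.
under eq_bigr => j _ do rewrite /c sr.
under eq_bigl => j do rewrite /chi sr.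
rewrite sumrN => /eqP; rewrite oppr_eq0 sumr_const pnatr_eq0 => /eqP; apply/eqP; rewrite -lt0n.
by apply/card_gt0P; exists i0; rewrite unfold_in; apply/clbP.
Qed.

Lemma char_natmul (R : comRingType) (A : R -> Prop) (C : numClosedFieldType)
  (chi : R * R -> C) :
  A 0 -> (forall x y, A x -> A y -> A (x + y)) ->
  (forall p q, A p.1 -> A p.2 -> A q.1 -> A q.2 -> chi (p.1 + q.1, p.2 + q.2) = chi p * chi q) ->
  chi (0, 0) = 1 ->
  forall a n, A a -> chi (n%:R * a, 0) = chi (a, 0) ^+ n.
Proof.
move=> A0 Aadd hm he a n Aa; elim: n => [|n IH]; first by rewrite mul0r expr0.
have An : A (n%:R * a).
  elim: (n) => [|m Am]; first by rewrite mul0r.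
  by rewrite -addn1 natrD mulrDl mul1r; apply: Aadd.
rewrite -addn1 natrD mulrDl mul1r exprD expr1 -IH.
by rewrite -(hm (n%:R * a, 0) (a, 0)) //= addr0.
Qed.

Lemma pig (R : comRingType) (A : R -> Prop) (C : numClosedFieldType) k
  (d : 'I_k -> R * R -> C) :
  A 0 -> A 1 -> (forall x y, A x -> A y -> A (x + y)) -> (forall x, A x -> A (- x)) ->
  (forall x y, A x -> A y -> A (x * y)) ->
  (forall i p q, A p.1 -> A p.2 -> A q.1 -> A q.2 ->
     d i (p.1 + q.1, p.2 + q.2) = d i p * d i q) ->
  (forall i, d i (0, 0) = 1) ->
  (forall b p, A b -> A p.1 -> A p.2 ->
     \sum_i d i (p.1 + b * p.2, p.2) = \sum_i d i p) ->
  forall i t, A t -> d i (k`!%:R * t, 0) = 1.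
Proof.
move=> A0 A1 Aadd Aopp Amul dm de hinv i0 t At.
have An : forall n, A (n%:R).
  by elim=> [|n IH]; rewrite ?mulr0n // -addn1 natrD; apply: Aadd.
have hsig : forall j : 'I_k.+1, exists u : 'I_k, forall p, A p.1 /\ A p.2 ->
    d u p = d i0 (p.1 + (j%:R * t) * p.2, p.2).
  move=> j.
  have Ab : A (j%:R * t) by apply: Amul.
  apply: (@multiset_sub (R * R) (fun p => A p.1 /\ A p.2)
     (fun p q => (p.1 + q.1, p.2 + q.2)) (0, 0) C _ _ k d
     (fun i p => d i (p.1 + (j%:R * t) * p.2, p.2))).
  - by split.
  - by move=> [a1 a2] [b1 b2] /= [h1 h2] [h3 h4]; split; apply: Aadd.
  - by move=> i [a1 a2] [b1 b2] /= [h1 h2] [h3 h4]; exact: (dm i (a1, a2) (b1, b2) h1 h2 h3 h4).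
  - exact: de.
  - move=> i [a1 a2] [b1 b2] /= [h1 h2] [h3 h4].
    have Ax : A (a1 + j%:R * t * a2) by apply: Aadd => //; apply: Amul.
    have Ay : A (b1 + j%:R * t * b2) by apply: Aadd => //; apply: Amul.
    rewrite -(dm i (a1 + j%:R * t * a2, a2) (b1 + j%:R * t * b2, b2) Ax h2 Ay h4) /=.
    by rewrite mulrDr addrACA.
  - by move=> i /=; rewrite mulr0 addr0 de.
  - by move=> [a1 a2] /= [h1 h2]; symmetry; exact: (hinv _ (a1, a2) Ab h1 h2).
have [sig hs] := fin_all_exists hsig.
have : ~~ injectiveb sig.
  by apply/negP => /injectiveP /leq_card; rewrite !card_ord ltnn.
case/injectivePn => x [y nxy exy].
have gen : forall x y : nat, (x < y <= k)%N ->
    (forall p, A p.1 -> A p.2 -> d i0 (p.1 + (x%:R * t) * p.2, p.2) =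
                                d i0 (p.1 + (y%:R * t) * p.2, p.2)) ->
    d i0 (k`!%:R * t, 0) = 1.
  move=> {x y nxy exy} x y /andP [lxy lyk] key.
  have Axt : A (x%:R * t) by apply: Amul.
  have := key (- (x%:R * t), 1) (Aopp _ Axt) A1.
  have e : - (x%:R * t) + y%:R * t = (y - x)%:R * t.
    by rewrite natrB ?(ltnW lxy) // mulrBl addrC.
  rewrite /= !mulr1 addNr e => h.
  set m := (y - x)%N in h.
  have Amt : A (m%:R * t) by apply: Amul.
  have h2 : d i0 (m%:R * t, 1) = d i0 (m%:R * t, 0) * d i0 (0, 1).
    by rewrite -(dm i0 (m%:R * t, 0) (0, 1) Amt A0 A0 A1) /= addr0 add0r.
  have nz : d i0 (0, 1) != 0.
    apply/eqP => h0; have := dm i0 (0, 1) (0, -1) A0 A1 A0 (Aopp _ A1).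
    by rewrite /= addr0 addrN de h0 mul0r; apply/eqP; rewrite oner_eq0.
  have hm1 : d i0 (m%:R * t, 0) = 1.
    by apply: (mulIf nz); rewrite -h2 -h mul1r.
  have m0 : (0 < m <= k)%N.
    by rewrite /m subn_gt0 lxy /= (leq_trans (leq_subr _ _) lyk).
  rewrite -(divnK (dvdn_fact m0)) natrM -mulrA.
  by rewrite (@char_natmul R A C (d i0) A0 Aadd (dm i0) (de i0)) // hm1 expr1n.
case: (ltngtP x y) => hxy.
- apply: (gen x y); first by rewrite hxy /= -ltnS ltn_ord.
  move=> p h1 h2; rewrite -!hs //= exy //.
- apply: (gen y x); first by rewrite hxy /= -ltnS ltn_ord.
  move=> p h1 h2; rewrite -!hs //= exy //.
- by move: nxy; rewrite (val_inj hxy) eqxx.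
Qed.
Lemma unitary_diag (C : numClosedFieldType) k (M : 'M[C]_k) :
  M *m (map_mx Num.conj M)^T = 1%:M ->
  exists2 P : 'M_k, P \in unitmx & similar_diag P M.
Proof.
move=> h.
have hn : M \is normalmx.
  rewrite qualifE -map_trmx h (mulmx1C h) //.
move/orthomx_spectralP: hn => hM.
exists (spectralmx M); first exact: spectral_unit.
rewrite /similar_to conjumx ?spectral_unit // {2}hM !mulmxA mulmxV ?spectral_unit // mul1mx.
by rewrite -mulmxA mulmxV ?spectral_unit // mulmx1 diag_mx_is_diag.
Qed.

Lemma dim_span_cons (K : fieldType) (vT : vectType K) (X : seq vT) v :
  v \notin <<X>>%VS -> (\dim <<X>>%VS < \dim <<v :: X>>%VS)%N.
Proof.
move=> nv; rewrite ltnNge; apply/negP => hle; move/negP: nv; apply.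
have : (<<X>> == <<v :: X>>)%VS by rewrite eqEdim hle andbT span_cons addvSr.
by move/eqP ->; apply: memv_span; rewrite mem_head.
Qed.

Lemma fin_span (K : fieldType) (vT : vectType K) (T : Type) (D : T -> Prop) (M : T -> vT) :
  exists X : seq vT, (forall v, v \in X -> exists t, D t /\ v = M t) /\
    (forall t, D t -> M t \in <<X>>%VS).
Proof.
suff: forall n (X : seq vT), (\dim (fullv : {vspace vT}) - \dim <<X>>%VS <= n)%N ->
   (forall v, v \in X -> exists t, D t /\ v = M t) ->
   exists X : seq vT, (forall v, v \in X -> exists t, D t /\ v = M t) /\
    (forall t, D t -> M t \in <<X>>%VS).
  by move/(_ _ [::] (leqnn _)); apply.
elim=> [|n IH] X hX hXD;
  (have [hall|] := classic (forall t, D t -> M t \in <<X>>%VS); first by exists X);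
  move/not_all_ex_not => [t] /(imply_to_and (D t)) [Dt /negP nt];
  have lt := @dim_span_cons _ _ _ _ nt;
  have le : (\dim <<M t :: X>>%VS <= \dim (fullv : {vspace vT}))%N by apply: dimvS; apply: subvf.
  move: hX lt le; move: (\dim _) (\dim _) (\dim _) => a b c.
  rewrite -!minusE => /ssrnat.leP h1 /ssrnat.leP h2 /ssrnat.leP h3; lia.
apply: (IH (M t :: X)).
  move: hX lt le; move: (\dim _) (\dim _) (\dim _) => a b c.
  rewrite -!minusE => /ssrnat.leP h1 /ssrnat.leP h2 /ssrnat.leP h3; apply/ssrnat.leP; lia.
move=> v; rewrite in_cons => /orP [/eqP -> | /hXD //]; by exists t.
Qed.

Lemma codiag_family (C : numClosedFieldType) k (T : Type) (D : T -> Prop) (M : T -> 'M[C]_k) :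
  (forall t, D t -> M t *m (map_mx Num.conj (M t))^T = 1%:M) ->
  (forall s t, D s -> D t -> M s *m M t = M t *m M s) ->
  exists2 P : 'M[C]_k, P \in unitmx & forall t, D t -> is_diag_mx (P *m M t *m invmx P).
Proof.
move=> hu hc.
have [X [hXD hXs]] := @fin_span _ _ _ D M.
have [|P Punit hP] := (codiagonalizableP X).1.
  split.
  - move=> f g /hXD [s [Ds ->]] /hXD [t [Dt ->]]; exact: hc.
  - move=> f /hXD [t [Dt ->]]; exact: (@unitary_diag _ _ _ (hu t Dt)).
exists P => // t Dt.
have := @coord_span _ _ _ (in_tuple X) (M t) (hXs t Dt).
move=> ->.
rewrite -conjumx //.
apply/is_diag_mxP => i j nij.
rewrite /conjmx mulmx_sumr mulmx_suml summxE big1 // => l _.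
rewrite -scalemxAr -scalemxAl mxE.
have := (allP hP) (X`_l) (mem_nth 0 (ltn_ord l)).
by rewrite /= /similar_to => /is_diag_mxP ->; rewrite ?mulr0.
Qed.

Theorem lemma4p4 (L : fieldExtType rat) (B S : pred L)
  (C : numClosedFieldType) (k : nat) (mu : L -> L -> 'M[C]_k) :
  is_order B -> mult_closed_in B S -> 0 \notin S ->
  (* mu is a group homomorphism from (A^2, +) *)
  (forall x1 y1 x2 y2, localization B S x1 -> localization B S y1 ->
     localization B S x2 -> localization B S y2 ->
     mu (x1 + x2) (y1 + y2) = mu x1 y1 *m mu x2 y2) ->
  (* ... into the unitary group U(k) *)
  (forall x y, localization B S x -> localization B S y ->
     mu x y *m adjmx (mu x y) = 1%:M) ->
  (* the character is SL(2,A)-invariant *)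
  (forall a b c d x y,
     localization B S a -> localization B S b ->
     localization B S c -> localization B S d ->
     a * d - b * c = 1 ->
     localization B S x -> localization B S y ->
     \tr (mu (a * x + b * y) (c * x + d * y)) = \tr (mu x y)) ->
  exists q : nat, (0 < q)%N /\
    forall x y, localization B S x -> localization B S y ->
      mu (q%:R * x) (q%:R * y) = 1%:M.
Proof.
move=> hB hS S0 hmu hun htr.
have [[B1 [Bsub Bmul]] _] := hB.
have [SB [S1 Smul]] := hS.
have Snz : forall s, s \in S -> s != 0.
  by move=> s hs; apply/eqP => h; move: S0; rewrite -h hs.
have B0 : 0 \in B by rewrite -(subrr 1); apply: Bsub.
have Bopp : forall x, x \in B -> - x \in B by move=> x hx; rewrite -sub0r; apply: Bsub.
have Badd : forall x y, x \in B -> y \in B -> x + y \in B.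
  by move=> x y hx hy; rewrite -[y]opprK; apply: Bsub => //; apply: Bopp.
have L0 : localization B S 0 by exists 0, 1; split => //; rewrite mul0r.
have L1 : localization B S 1 by exists 1, 1; split => //; rewrite divr1.
have Ladd : forall x y, localization B S x -> localization B S y -> localization B S (x + y).
  move=> x y [b [s [hb hs ->]]] [c [u [hc hu ->]]].
  exists (b * u + c * s), (s * u); split.
  - by apply: Badd; apply: Bmul => //; apply: SB.
  - by apply: Smul.
  - by rewrite addf_div ?Snz.
have Lopp : forall x, localization B S x -> localization B S (- x).
  move=> x [b [s [hb hs ->]]]; exists (- b), s; split => //; first by apply: Bopp.
  by rewrite mulNr.
have Lmul : forall x y, localization B S x -> localization B S y -> localization B S (x * y).
  move=> x y [b [s [hb hs ->]]] [c [u [hc hu ->]]].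
  exists (b * c), (s * u); split; [by apply: Bmul | by apply: Smul | by rewrite mulf_div].
have Lnat : forall n, localization B S n%:R.
  by elim=> [|n IH]; rewrite ?mulr0n // -addn1 natrD; apply: Ladd.
have [P Punit hdiag] := @codiag_family C k (L * L)
   (fun p => localization B S p.1 /\ localization B S p.2) (fun p => mu p.1 p.2)
   (fun p h => hun p.1 p.2 h.1 h.2)
   (fun s t hs ht => etrans (esym (hmu _ _ _ _ hs.1 hs.2 ht.1 ht.2))
      (etrans (congr2 mu (addrC _ _) (addrC _ _)) (hmu _ _ _ _ ht.1 ht.2 hs.1 hs.2))).
pose d (i : 'I_k) (p : L * L) := (P *m mu p.1 p.2 *m invmx P) i i.
have hM0 : mu 0 0 = 1%:M.
  have e := hmu 0 0 0 0 L0 L0 L0 L0; rewrite !addr0 in e.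
  by rewrite -[mu 0 0]mulmx1 -(hun 0 0 L0 L0) mulmxA -e.
have dm : forall i p q, localization B S p.1 -> localization B S p.2 ->
    localization B S q.1 -> localization B S q.2 ->
    d i (p.1 + q.1, p.2 + q.2) = d i p * d i q.
  move=> i [p1 p2] [q1 q2] /= h1 h2 h3 h4; rewrite /d /= hmu //.
  have -> : P *m (mu p1 p2 *m mu q1 q2) *m invmx P =
      (P *m mu p1 p2 *m invmx P) *m (P *m mu q1 q2 *m invmx P).
    by rewrite !mulmxA mulmxKV.
  have /diag_mxP [a ha] := hdiag (p1, p2) (conj h1 h2).
  rewrite /= in ha; rewrite ha mul_diag_mx !mxE eqxx mulr1n //.
have de : forall i, d i (0, 0) = 1.
  by move=> i; rewrite /d /= hM0 mulmx1 mulmxV // mxE eqxx mulr1n.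
have dtr : forall p, localization B S p.1 -> localization B S p.2 ->
    \tr (mu p.1 p.2) = \sum_i d i p.
  move=> p _ _; rewrite /d.
  have -> : \tr (mu p.1 p.2) = \tr (P *m mu p.1 p.2 *m invmx P).
    by rewrite mxtrace_mulC mulmxA mulVmx // mul1mx.
  by [].
have hinv : forall b p, localization B S b -> localization B S p.1 ->
    localization B S p.2 -> \sum_i d i (p.1 + b * p.2, p.2) = \sum_i d i p.
  move=> b [p1 p2] hb /= h1 h2.
  rewrite -(dtr (p1 + b * p2, p2)) /=; last 2 first.
  - by apply: Ladd => //; apply: Lmul.
  - by [].
  rewrite -(dtr (p1, p2)) //.
  have := htr 1 b 0 1 p1 p2 L1 hb L0 L1 _ h1 h2.
  rewrite mulr1 mulr0 subr0 => /(_ erefl).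
  by rewrite !mul1r mul0r add0r.
have hx := @pig L (localization B S) C k d L0 L1 Ladd Lopp Lmul dm de hinv.
have hw : forall i0, exists j, forall p, localization B S p.1 /\ localization B S p.2 ->
    d j p = d i0 (- p.2, p.1).
  apply: (@multiset_sub (L * L) (fun p => localization B S p.1 /\ localization B S p.2)
     (fun p q => (p.1 + q.1, p.2 + q.2)) (0, 0) C _ _ k d
     (fun i p => d i (- p.2, p.1))).
  - by split.
  - by move=> [a1 a2] [b1 b2] /= [h1 h2] [h3 h4]; split; apply: Ladd.
  - by move=> i [a1 a2] [b1 b2] /= [h1 h2] [h3 h4]; exact: (dm i (a1, a2) (b1, b2) h1 h2 h3 h4).
  - exact: de.
  - move=> i [a1 a2] [b1 b2] /= [h1 h2] [h3 h4].
    rewrite opprD; exact: (dm i (- a2, a1) (- b2, b1) (Lopp _ h2) h1 (Lopp _ h4) h3).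
  - by move=> i /=; rewrite oppr0 de.
  - move=> [a1 a2] /= [h1 h2].
    rewrite -(dtr (a1, a2)) // -(dtr (- a2, a1)) /=; last 2 first.
    + exact: Lopp.
    + by [].
    have := htr 0 (-1) 1 0 a1 a2 L0 (Lopp _ L1) L1 L0 _ h1 h2.
    rewrite mulr0 mulN1r opprK add0r => /(_ erefl).
    by rewrite mul0r add0r mulN1r mul1r mul0r addr0.
have hy : forall i y, localization B S y -> d i (0, k`!%:R * y) = 1.
  move=> i y hy; have [j hj] := hw i.
  have := hj (k`!%:R * y, 0) (conj (Lmul _ _ (Lnat _) hy) L0).
  by rewrite /= oppr0 => <-; apply: hx.
exists k`!; split; first exact: fact_gt0.
move=> x y Lx Ly.
have hq : P *m mu (k`!%:R * x) (k`!%:R * y) *m invmx P = 1%:M.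
  apply/matrixP => i j; rewrite [RHS]mxE.
  case: (eqVneq i j) => [<-|nij].
  - rewrite ?eqxx ?mulr1n.
    have e := dm i (k`!%:R * x, 0) (0, k`!%:R * y) (Lmul _ _ (Lnat _) Lx) L0 L0 (Lmul _ _ (Lnat _) Ly).
    rewrite /= addr0 add0r in e.
    have := e; rewrite /d /= => ->.
    have := hx i x Lx; have := hy i y Ly; rewrite /d /= => -> ->.
    by rewrite mulr1.
  - have := hdiag (k`!%:R * x, k`!%:R * y) (conj (Lmul _ _ (Lnat _) Lx) (Lmul _ _ (Lnat _) Ly)).
    move/is_diag_mxP => /(_ i j) h; rewrite h //.
have := congr1 (fun X => invmx P *m X *m P) hq.
by rewrite /= !mulmxA mulVmx // mul1mx mulmxKV // mulmx1 mulVmx.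
Qed.
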